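(* Let $X_n(\underline{d})=X_n(d_1,\dots,d_r)\subset\mathbb{C}P^{n+r}$ be a complete intersection with $d_1,\dots,d_r>1$ and set $c_1=n+r+1-\sum_{i=1}^rd_i$. Then: (1) ${\rm Td}(X_n(\underline{d}))=1$ if $c_1>0$, and ${\rm Td}(X_n(\underline{d}))=1+(-1)^n$ if $c_1=0$. (2) If $c_1<0$, then $(-1)^n{\rm Td}(X_n(\underline{d}))\geqslant\binom{n+1-c_1}{n+1}+(-1)^n$.
   Context: A complete intersection $X_n(d_1,\dots,d_r)\subset\mathbb{C}P^{n+r}$ is a compact complex $n$-dimensional manifold given as the transversal intersection of $r$ nonsingular hypersurfaces of degrees $d_1,\dots,d_r$; its first Chern class is $c_1x$ with $x$ the pullback of the hyperplane class. The Todd genus is ${\rm Td}(M)=\big(\prod_i\frac{x_i}{1-e^{-x_i}}\big)[M]$ for formal Chern roots $x_i$. Generalized binomial coefficients: $\binom{a}{m}=\frac{a(a-1)\cdots(a-m+1)}{m!}$. *)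

(* Defs.v *)
From mathcomp Require Import all_boot all_order all_algebra.
Set Implicit Arguments. Unset Strict Implicit. Unset Printing Implicit Defensive.
Import Order.TTheory GRing.Theory Num.Theory.
Local Open Scope ring_scope.

(* Coefficients of the power series  e(x) = (1 - e^{-x})/x = sum_k (-1)^k x^k/(k+1)!. *)
Definition ecoef (k : nat) : rat := (-1) ^+ k / (k.+1)`!%:R.

(* Coefficients of the Todd series  x/(1-e^{-x}) = 1/e(x), computed by the
   recursion  t_0 = 1,  t_m = - sum_{j=1}^m e_j t_{m-j}  (i.e. t * e = 1). *)
Fixpoint todd_seq (m : nat) : seq rat :=
  match m with
  | 0 => [:: 1]
  | m'.+1 => let s := todd_seq m' in
      rcons s (- \sum_(j < m'.+1) ecoef j.+1 * nth 0 s (m' - j))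
  end.

Definition todd_coef (k : nat) : rat := nth 0 (todd_seq k) k.

Definition todd_poly (n : nat) : {poly rat} := \poly_(k < n.+1) todd_coef k.

Definition edpoly (n d : nat) : {poly rat} := \poly_(k < n.+1) (d%:R ^+ k * ecoef k).

(* With x the hyperplane class, td(TX) = (x/(1-e^{-x}))^{n+r+1} / prod_i (d_i x/(1-e^{-d_i x}))
   (from TX + ⊕ O(d_i) = T CP^{n+r}|_X), and x^n[X] = prod_i d_i. *)
Definition ci_todd (n : nat) (ds : seq nat) : rat :=
  (\prod_(d <- ds) (d%:R : rat)) *
  ((todd_poly n) ^+ (n + size ds).+1 * \prod_(d <- ds) edpoly n d)`_n.

Definition ci_c1 (n : nat) (ds : seq nat) : int :=
  ((n + size ds).+1)%:Z - (\sum_(d <- ds) d)%:Z.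

Definition gbinom (a : rat) (m : nat) : rat :=
  (\prod_(i < m) (a - i%:R)) / m`!%:R.

(* Main.v *)
Require Import Defs.
From mathcomp Require Import all_boot all_order all_algebra.
From mathcomp Require Import ring lra zify.
Import Order.TTheory GRing.Theory Num.Theory.
Local Open Scope ring_scope.

Module Aux.
Set Implicit Arguments. Unset Strict Implicit. Unset Printing Implicit Defensive.

Definition cong (k : nat) (p q : {poly rat}) := exists r : {poly rat}, p = q + r * 'X^k.

Lemma cong_refl k (p : {poly rat})  : cong k p p.
Proof. by exists 0; rewrite mul0r addr0. Qed.

Lemma cong_sym k (p q : {poly rat})  : cong k p q -> cong k q p.
Proof. by case=> r ->; exists (- r); rewrite mulNr addrK. Qed.

Lemma cong_trans k (p q : {poly rat}) s  : cong k p q -> cong k q s -> cong k p s.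
Proof. by case=> r1 -> [r2 ->]; exists (r2 + r1); rewrite mulrDl addrA. Qed.

Lemma congD k (p1 q1 p2 q2 : {poly rat})  : cong k p1 q1 -> cong k p2 q2 -> cong k (p1 + p2) (q1 + q2).
Proof. by case=> r1 -> [r2 ->]; exists (r1 + r2); rewrite mulrDl; ring. Qed.

Lemma congN k (p q : {poly rat})  : cong k p q -> cong k (- p) (- q).
Proof. by case=> r ->; exists (- r); rewrite mulNr opprD. Qed.

Lemma congB k (p1 q1 p2 q2 : {poly rat})  : cong k p1 q1 -> cong k p2 q2 -> cong k (p1 - p2) (q1 - q2).
Proof. by move=> h1 h2; apply: congD => //; apply: congN. Qed.

Lemma congM k (p1 q1 p2 q2 : {poly rat})  : cong k p1 q1 -> cong k p2 q2 -> cong k (p1 * p2) (q1 * q2).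
Proof.
case=> r1 -> [r2 ->]; exists (r1 * q2 + q1 * r2 + r1 * r2 * 'X^k).
rewrite !mulrDl; ring.
Qed.

Lemma congX k (p q : {poly rat}) m  : cong k p q -> cong k (p ^+ m) (q ^+ m).
Proof.
move=> h; elim: m => [|m IH]; first by rewrite !expr0; apply: cong_refl.
by rewrite !exprS; apply: congM.
Qed.

Lemma cong_prod k (I : Type) (s : seq I) (F G : I -> {poly rat}) :
  (forall i, cong k (F i) (G i)) -> cong k (\prod_(i <- s) F i) (\prod_(i <- s) G i).
Proof.
move=> h; elim: s => [|a s IH]; first by rewrite !big_nil; apply: cong_refl.
by rewrite !big_cons; apply: congM.
Qed.

Lemma cong_coef k (p q : {poly rat}) i  : cong k p q -> (i < k)%N -> p`_i = q`_i.
Proof. by case=> r -> hi; rewrite coefD coefMXn hi addr0. Qed.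

Lemma cong_of_coef k (p q : {poly rat})  : (forall i, (i < k)%N -> p`_i = q`_i) -> cong k p q.
Proof.
move=> h; exists (drop_poly k (p - q)).
have ht : take_poly k (p - q) = 0.
  apply/polyP => i; rewrite coef_take_poly coef0 coefB.
  by case: ifP => // hi; rewrite h // subrr.
have := poly_take_drop k (p - q); rewrite ht add0r => ->.
by rewrite addrC subrK.
Qed.

Lemma cong_le j k (p q : {poly rat})  : (j <= k)%N -> cong k p q -> cong j p q.
Proof.
move=> hjk h; apply: cong_of_coef => i hi; apply: (cong_coef h).
exact: leq_trans hi hjk.
Qed.

Lemma cong_cancelX k (p q : {poly rat})  : cong k.+1 ('X * p) ('X * q) -> cong k p q.
Proof.
move=> h; apply: cong_of_coef => i hi.
have := cong_coef (i:=i.+1) h; rewrite ltnS => /(_ hi).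
by rewrite !coefXM.
Qed.

Lemma cong_deriv k (p q : {poly rat})  : cong k.+1 p q -> cong k p^`() q^`().
Proof.
case=> r ->; exists (r^`() * 'X + r *+ k.+1).
rewrite derivD derivM derivXn /= exprS mulrDl mulrA.
by rewrite mulrnAr mulrnAl.
Qed.


Lemma size_todd_seq m : size (todd_seq m) = m.+1.
Proof. by elim: m => //= m IH; rewrite size_rcons IH. Qed.

Lemma nth_todd_seq m i : (i <= m)%N -> nth 0 (todd_seq m) i = todd_coef i.
Proof.
elim: m => [|m IH]; first by rewrite leqn0 => /eqP ->.
rewrite leq_eqVlt => /orP [/eqP -> //|]; rewrite ltnS => him.
by rewrite /= nth_rcons size_todd_seq ltnS him IH.
Qed.

Lemma todd_coef0 : todd_coef 0 = 1.
Proof. by []. Qed.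

Lemma todd_coefS m : todd_coef m.+1 = - \sum_(j < m.+1) ecoef j.+1 * todd_coef (m - j).
Proof.
rewrite /todd_coef /= nth_rcons size_todd_seq ltnn eqxx.
congr (- _); apply: eq_bigr => j _; rewrite nth_todd_seq //; exact: leq_subr.
Qed.

Lemma ecoef0 : ecoef 0 = 1.
Proof. by rewrite /ecoef expr0 divr1. Qed.

Lemma coef_todd n k : (k <= n)%N -> (todd_poly n)`_k = todd_coef k.
Proof. by move=> h; rewrite coef_poly ltnS h. Qed.

Lemma coef_e n k : (k <= n)%N -> (edpoly n 1)`_k = ecoef k.
Proof. by move=> h; rewrite coef_poly ltnS h expr1n mul1r. Qed.

Lemma F1 n : cong n.+1 (todd_poly n * edpoly n 1) 1.
Proof.
apply: cong_of_coef => i; rewrite ltnS => hi; rewrite coefMr coef1.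
case: i hi => [|m] hm.
  by rewrite big_ord1 subn0 coef_todd // coef_e // todd_coef0 ecoef0 mulr1.
rewrite big_ord_recl /= subn0 coef_todd // coef_e // ecoef0 mulr1 todd_coefS.
rewrite addrC /=; apply/eqP; rewrite addr_eq0; apply/eqP.
rewrite opprK; apply: eq_bigr => j _.
rewrite /bump leq0n add1n subSS coef_todd; last by apply: leq_trans (leq_subr _ _) (ltnW hm).
rewrite coef_e; first by rewrite mulrC.
apply: leq_trans (ltn_ord j) hm.
Qed.


Lemma fact_neq0 k : (k`!%:R : rat) != 0.
Proof. by rewrite pnatr_eq0 -lt0n fact_gt0. Qed.

Lemma ecoefS k : ecoef k.+1 *+ k.+2 = - ecoef k.
Proof.
rewrite /ecoef -mulr_natr factS natrM exprS.
have h1 := fact_neq0 k.+1.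
have h2 : (k.+2%:R : rat) != 0 by rewrite pnatr_eq0.
field. by rewrite h1 /= -(natrD _ 2 k) pnatr_eq0.
Qed.

Lemma F2 n : cong n.+1 (1 - 'X * edpoly n 1) (edpoly n 1 + 'X * (edpoly n 1)^`()).
Proof.
apply: cong_of_coef => i; rewrite ltnS => hi.
rewrite coefB coef1 coefD !coefXM; case: i hi => [|k] hk /=.
  by rewrite coef_e // ecoef0 subr0 addr0.
rewrite coef_deriv (coef_e (ltnW hk)) (coef_e hk).
by rewrite sub0r -[X in X + _]mulr1n -mulrnDr -ecoefS.
Qed.

Lemma stepC n j : (j <= n)%N -> ((todd_poly n) ^+ j.+1)`_j = 1.
Proof.
set t := todd_poly n; set e := edpoly n 1.
have F1' : cong n.+1 (t * e) 1 by apply: F1.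
have D : cong n (t * e^`()) (- (t^`() * e)).
  have := cong_deriv F1'; rewrite derivM derivC => h.
  have := congB h (cong_refl n (t^`() * e)).
  by rewrite addrC addKr sub0r.
elim: j => [|i IH] hj; first by rewrite expr1 coef_todd.
have hi : (i <= n)%N by apply: ltnW.
rewrite -(IH hi).
have E0 : t ^+ i.+2 = t ^+ i.+2 * (1 - 'X * e) + 'X * t ^+ i.+1 * (t * e).
  rewrite !exprS; ring.
have C1 : cong n.+1 (t ^+ i.+2 * (1 - 'X * e)) (t ^+ i.+1 + 'X * (t ^+ i.+2 * e^`())).
  apply: cong_trans (congM (cong_refl _ _) (F2 n)) _.
  have -> : t ^+ i.+2 * (e + 'X * e^`()) = t ^+ i.+1 * (t * e) + 'X * (t ^+ i.+2 * e^`()).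
    rewrite !exprS; ring.
  apply: congD (cong_refl _ _); rewrite -[X in cong _ _ X]mulr1.
  exact: congM (cong_refl _ _) F1'.
have C2 : cong n.+1 ('X * t ^+ i.+1 * (t * e)) ('X * t ^+ i.+1).
  rewrite -[X in cong _ _ X]mulr1; exact: congM (cong_refl _ _) F1'.
have C3 : cong n (t ^+ i.+2 * e^`()) (- (t ^+ i * t^`())).
  have -> : t ^+ i.+2 * e^`() = t ^+ i.+1 * (t * e^`()) by rewrite !exprS; ring.
  apply: cong_trans (congM (cong_refl _ _) D) _.
  have -> : t ^+ i.+1 * - (t^`() * e) = - (t ^+ i * t^`()) * (t * e) by rewrite !exprS; ring.
  rewrite -[X in cong _ _ X]mulr1.
  exact: congM (cong_refl _ _) (cong_le (leqnSn n) F1').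
have C4 : (t ^+ i * t^`())`_i = (t ^+ i.+1)`_i.+1.
  have h := coef_deriv (t ^+ i.+1) i.
  rewrite deriv_exp /= coefMn mulrC in h.
  apply: (mulIf (x := i.+1%:R)); first by rewrite pnatr_eq0.
  by rewrite !mulr_natr.
have := congD C1 C2; rewrite -E0 => /(cong_coef (i:=i.+1)); rewrite ltnS => /(_ hj).
move=> H.
have H' : (t ^+ i.+2)`_i.+1 = (t ^+ i.+1)`_i.+1 + (t ^+ i.+2 * e^`())`_i + (t ^+ i.+1)`_i.
  by rewrite H coefD coefD -mulrA !coefXM.
rewrite H' (cong_coef C3 hj) coefN C4.
by rewrite addrC addrA addrK.
Qed.


Definition expo (n : nat) (c : rat) : {poly rat} := \poly_(k < n.+2) (c ^+ k / k`!%:R).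

Lemma E1 n a b : cong n.+2 (expo n a * expo n b) (expo n (a + b)).
Proof.
apply: cong_of_coef => i hi; rewrite coefM coef_poly hi addrC exprDn mulr_suml.
apply: eq_bigr => [[j hj]] _ /=.
rewrite !coef_poly (leq_ltn_trans (leq_subr _ _) hi) (leq_ltn_trans _ hi) //.
have hji : (j <= i)%N by [].
have hf := bin_fact hji.
have -> : (i`!%:R : rat) = 'C(i, j)%:R * (j`!%:R * (i - j)`!%:R) by rewrite -!natrM hf.
have h1 := fact_neq0 j; have h2 := fact_neq0 (i - j).
rewrite -[_ *+ 'C(i, j)]mulr_natr; field.
by rewrite h1 h2 pnatr_eq0 -lt0n bin_gt0.
Qed.

Lemma E2 n a d : cong n.+2 (expo n a ^+ d) (expo n (d%:R * a)).
Proof.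
elim: d => [|d IH].
  rewrite expr0 mul0r; apply: cong_of_coef => i hi.
  rewrite coef1 coef_poly; case: ifP => [_|/negbT/negP[]]; last exact: hi.
  rewrite expr0n; case: i hi => [|i] hi /=; first by rewrite divr1.
  by rewrite mul0r.
rewrite exprSr; apply: cong_trans (congM IH (cong_refl _ _)) _.
have -> : d.+1%:R * a = d%:R * a + a by rewrite -addn1 natrD mulrDl mul1r.
exact: E1.
Qed.

Lemma E3 n : cong n.+2 (1 - 'X * edpoly n 1) (expo n (-1)).
Proof.
apply: cong_of_coef => i hi; rewrite coefB coef1 coefXM /expo [in RHS]coef_poly hi.
case: i hi => [|k] hk /=; first by rewrite subr0 expr0 divr1.
rewrite coef_e // /ecoef exprS; ring.
Qed.

Lemma E4 n d : cong n.+2 ('X * (d%:R%:P * edpoly n d)) (1 - expo n (- d%:R)).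
Proof.
apply: cong_of_coef => i hi; rewrite coefB coef1 coefXM /expo [in RHS]coef_poly hi.
case: i hi => [|k] hk /=; first by rewrite expr0 divr1 subrr.
rewrite coefCM coef_poly (hk : (k < n.+1)%N) /ecoef exprS [(- d%:R) ^+ _]exprNn. rewrite -mulNrn; ring.
Qed.

Definition W (d : nat) (u : {poly rat}) := \sum_(j < d) u ^+ j.

Lemma stepB n d : cong n.+1 (d%:R%:P * edpoly n d)
   (edpoly n 1 * W d (1 - 'X * edpoly n 1)).
Proof.
apply: cong_cancelX.
apply: cong_trans (E4 n d) _.
set e := edpoly n 1.
have h : cong n.+2 (expo n (- d%:R)) ((1 - 'X * e) ^+ d).
  have := E2 n (-1) d; rewrite mulrN1 => h.
  apply: cong_trans (cong_sym h) _.
  exact: congX (cong_sym (E3 n)).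
apply: cong_trans (congB (cong_refl _ 1) h) _.
have -> : 'X * (e * W d (1 - 'X * e)) = 1 ^+ d - (1 - 'X * e) ^+ d.
  rewrite mulrA subrXX /W; congr (_ * _).
    by rewrite opprB addrC subrK.
  by apply: eq_bigr => j _; rewrite expr1n mul1r.
by rewrite expr1n; apply: cong_refl.
Qed.


Definition g (d : nat) : {poly rat} := \poly_(j < d) 1.
Definition G (ds : seq nat) : {poly rat} := \prod_(d <- ds) g d.
Definition u (n : nat) : {poly rat} := 1 - 'X * edpoly n 1.
Definition hh (n a : nat) : rat := if a is a'.+1 then (-1) ^+ n * 'C(a', n)%:R else 1.

Lemma size_g d : size (g d) = d.
Proof.
case: d => [|d]; first by apply/eqP; rewrite -leqn0; exact: size_poly.
by rewrite size_poly_eq // oner_eq0.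
Qed.

Lemma gW d v : g d \Po v = W d v.
Proof.
rewrite comp_polyE size_g /W; apply: eq_bigr => j _.
by rewrite coef_poly ltn_ord scale1r.
Qed.

Lemma GW ds v : G ds \Po v = \prod_(d <- ds) W d v.
Proof.
elim: ds => [|d ds IH]; first by rewrite /G !big_nil -polyC1 comp_polyC.
by rewrite /G !big_cons comp_polyM gW -IH.
Qed.

Lemma td1 n ds : ci_todd n ds = ((todd_poly n) ^+ n.+1 * (G ds \Po u n))`_n.
Proof.
rewrite /ci_todd.
set T := todd_poly n; set e := edpoly n 1.
have P1 : (\prod_(d <- ds) (d%:R : rat))%:P * \prod_(d <- ds) edpoly n d
          = \prod_(d <- ds) (d%:R%:P * edpoly n d).
  elim: ds => [|d ds IH]; first by rewrite !big_nil polyC1 mulr1.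
  by rewrite !big_cons polyCM mulrACA IH.
rewrite -coefCM mulrCA P1.
have C1 : cong n.+1 (\prod_(d <- ds) (d%:R%:P * edpoly n d)) (\prod_(d <- ds) (e * W d (u n))).
  by apply: cong_prod => d; apply: stepB.
have P2 : \prod_(d <- ds) (e * W d (u n)) = e ^+ size ds * \prod_(d <- ds) W d (u n).
  elim: ds {P1 C1} => [|d ds IH]; first by rewrite !big_nil expr0 mulr1.
  by rewrite !big_cons IH exprS mulrACA.
rewrite (cong_coef (congM (cong_refl _ (T ^+ (n + size ds).+1)) C1) (ltnSn n)) P2 GW.
set P := \prod_(d <- ds) W d (u n).
have E0 : T ^+ (n + size ds).+1 * (e ^+ size ds * P) = T ^+ n.+1 * P * (T * e) ^+ size ds.
  rewrite exprMn -addSn exprD -!mulrA; congr (_ * _); by rewrite mulrA mulrC.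
rewrite E0.
have C2 : cong n.+1 (T ^+ n.+1 * P * (T * e) ^+ size ds) (T ^+ n.+1 * P * 1).
  apply: congM (cong_refl _ _) _; rewrite -(expr1n _ (size ds)); apply: congX; exact: F1.
by rewrite (cong_coef C2 (ltnSn n)) mulr1.
Qed.

Lemma hrec0 n a : (todd_poly n * u n ^+ a.+1)`_0 = (todd_poly n * u n ^+ a)`_0.
Proof.
rewrite exprSr mulrA coef0M /u coefB coef1 coefXM /=.
by rewrite subr0 mulr1.
Qed.

Lemma hrecS n a j : (j < n)%N ->
  ((todd_poly n) ^+ j.+2 * u n ^+ a.+1)`_j.+1 =
  ((todd_poly n) ^+ j.+2 * u n ^+ a)`_j.+1 - ((todd_poly n) ^+ j.+1 * u n ^+ a)`_j.
Proof.
move=> hj.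
set T := todd_poly n; set e := edpoly n 1.
have E0 : T ^+ j.+2 * u n ^+ a.+1 = T ^+ j.+2 * u n ^+ a - 'X * (T ^+ j.+1 * u n ^+ a) * (T * e).
  rewrite [_ ^+ a.+1]exprSr [T ^+ j.+2]exprS /u.
rewrite /e; ring.
have C : cong n.+1 ('X * (T ^+ j.+1 * u n ^+ a) * (T * e)) ('X * (T ^+ j.+1 * u n ^+ a) * 1).
  apply: congM (cong_refl _ _) _; exact: F1.
rewrite E0 coefB (cong_coef C (hj : (j.+1 < n.+1)%N)) mulr1 coefXM.
by [].
Qed.

Lemma hclosed n a j : (j <= n)%N -> ((todd_poly n) ^+ j.+1 * u n ^+ a)`_j = hh j a.
Proof.
elim: a j => [|a IH] j hj.
  by rewrite expr0 mulr1 stepC.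
case: j hj => [|j] hj.
  rewrite expr1 hrec0; have := IH 0%N hj; rewrite expr1 => ->.
  by case: a {IH} => [|a] //=; rewrite expr0 mul1r bin0.
rewrite hrecS // !IH //; last exact: ltnW.
case: a {IH} => [|a] /=.
  by rewrite !bin0n subrr mulr0.
rewrite binS natrD exprS; ring.
Qed.

Lemma td2 n ds : ci_todd n ds = \sum_(a < size (G ds)) (G ds)`_a * hh n a.
Proof.
rewrite td1 comp_polyE mulr_sumr coef_sum; apply: eq_bigr => a _.
by rewrite -scalerAr coefZ hclosed.
Qed.


Definition Dg (ds : seq nat) : nat := \sum_(d <- ds) d.-1.

Lemma g_neq0 d : (0 < d)%N -> g d != 0.
Proof. by move=> h; rewrite -size_poly_eq0 size_g -lt0n. Qed.

Lemma size_G ds : all (fun d => 0 < d)%N ds -> size (G ds) = (Dg ds).+1.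
Proof.
elim: ds => [|d ds IH] /=; first by rewrite /G /Dg !big_nil size_poly1.
case/andP => hd hds; rewrite /G /Dg !big_cons size_mul ?g_neq0 //.
  by rewrite size_g -/(G ds) IH // -/(Dg ds); case: d hd => // d _; rewrite addnS.
by rewrite -size_poly_eq0 -/(G ds) IH.
Qed.

Lemma lead_G ds : all (fun d => 0 < d)%N ds -> lead_coef (G ds) = 1.
Proof.
move=> h; rewrite /G lead_coef_prod big_seq big1 // => d hd.
have hd0 : (0 < d)%N by move/allP: h => /(_ d hd).
by rewrite lead_coefE size_g coef_poly; case: d hd0 {hd} => // d _ /=; rewrite ltnSn.
Qed.

Lemma G0 ds : all (fun d => 0 < d)%N ds -> (G ds)`_0 = 1.
Proof.
elim: ds => [|d ds IH] /=; first by rewrite /G big_nil coef1.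
case/andP => hd hds; rewrite /G big_cons coef0M -/(G ds) IH // mulr1.
by rewrite coef_poly hd.
Qed.

Definition nonneg (p : {poly rat}) := forall i, 0 <= p`_i.

Lemma nonnegM p q : nonneg p -> nonneg q -> nonneg (p * q).
Proof. by move=> hp hq i; rewrite coefM; apply: sumr_ge0 => j _; apply: mulr_ge0. Qed.

Lemma coefM_ge p q i j : nonneg p -> nonneg q -> p`_i * q`_j <= (p * q)`_(i + j).
Proof.
move=> hp hq; rewrite coefM.
have hi : (i < (i + j).+1)%N by rewrite ltnS leq_addr.
rewrite (bigD1 (Ordinal hi)) //= addKn lerDl.
by apply: sumr_ge0 => k _; apply: mulr_ge0.
Qed.

Lemma G_coef ds : all (fun d => 0 < d)%N ds ->
  nonneg (G ds) /\ forall a, (a <= Dg ds)%N -> 1 <= (G ds)`_a.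
Proof.
elim: ds => [|d ds IH] /=.
  split; first by move=> i; rewrite /G big_nil coef1 ler0n.
  by rewrite /Dg big_nil => a; rewrite leqn0 => /eqP ->; rewrite /G big_nil coef1.
case/andP => hd hds; have [IH1 IH2] := IH hds.
have ng : nonneg (g d) by move=> i; rewrite coef_poly; case: ifP.
rewrite /G big_cons -/(G ds); split; first exact: nonnegM.
move=> a; rewrite /Dg big_cons -/(Dg ds) => ha.
pose i := minn a d.-1.
have -> : a = (i + (a - i))%N by rewrite subnKC // geq_minl.
apply: le_trans (coefM_ge _ _ ng IH1).
rewrite coef_poly (_ : (i < d)%N); last by rewrite /i; case: (d) hd => // d' _; rewrite ltnS geq_minr.
rewrite mul1r; apply: IH2; rewrite /i; lia.
Qed.


Lemma hockey n D : \sum_(a < D) ('C(a, n)%:R : rat) = 'C(D, n.+1)%:R.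
Proof.
elim: D => [|D IH]; first by rewrite big_ord0 bin0n.
by rewrite big_ord_recr /= IH binS natrD.
Qed.

Lemma gbinom_nat k m : (m <= k)%N -> gbinom k%:R m = 'C(k, m)%:R.
Proof.
move=> hm.
have P : forall m, (m <= k)%N -> \prod_(i < m) (k%:R - i%:R : rat) = (k ^_ m)%:R.
  elim=> [|j IH] hj; first by rewrite big_ord0 ffactn0.
  rewrite big_ord_recr /= IH; last exact: ltnW.
  by rewrite ffactnSr natrM natrB // ltnW.
rewrite /gbinom P // -bin_ffact natrM mulfK //. exact: fact_neq0.
Qed.

Lemma sumD ds : all (fun d => 0 < d)%N ds -> \sum_(d <- ds) d = (Dg ds + size ds)%N.
Proof.
elim: ds => [|d ds IH] /=; first by rewrite /Dg !big_nil.
case/andP => hd hds; rewrite /Dg !big_cons -/(Dg ds) IH //.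
by case: d hd => // d _ /=; lia.
Qed.

End Aux.
Import Aux.

Theorem corollary4p5 (n : nat) (ds : seq nat) :
  all (fun d => 1 < d)%N ds ->
  [/\ (0 < ci_c1 n ds -> ci_todd n ds = 1),
      (ci_c1 n ds = 0 -> ci_todd n ds = 1 + (-1) ^+ n)
    & (ci_c1 n ds < 0 ->
        gbinom ((n.+1)%:Z - ci_c1 n ds)%:~R n.+1 + (-1) ^+ n
          <= (-1) ^+ n * ci_todd n ds)].
Proof.
move=> H.
have Hp : all (fun d => 0 < d)%N ds by apply: sub_all H => d; apply: ltnW.
have hN := sumD Hp.
have hc1 : ci_c1 n ds = ((n + size ds).+1)%:Z - (Dg ds + size ds)%:Z by rewrite /ci_c1 hN.
have [Gnn Gge] := G_coef Hp.
have hTd : ci_todd n ds = 1 + (-1) ^+ n * \sum_(a < Dg ds) (G ds)`_a.+1 * 'C(a, n)%:R.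
  rewrite td2 size_G // big_ord_recl G0 // mul1r; congr (_ + _).
  rewrite mulr_sumr; apply: eq_bigr => a _; rewrite /hh /bump /=.
  by rewrite mulrCA.
move: hc1 hTd Gge; set D := Dg ds; set S := \sum_(a < D) _ => hc1 hTd Gge.
split.
- move=> hpos; have hDn : (D <= n)%N by move: hpos; rewrite hc1; lia.
  rewrite hTd; have -> : S = 0.
    rewrite /S big1 // => a _; rewrite bin_small ?mulr0 //.
    exact: leq_trans (ltn_ord a) hDn.
  by rewrite mulr0 addr0.
- move=> h0; have hD : D = n.+1 by move: h0; rewrite hc1; lia.
  rewrite hTd; have -> : S = 1.
    rewrite /S hD big_ord_recr /= binn mulr1 big1.
      rewrite add0r; have := lead_G Hp; rewrite lead_coefE size_G //.
      by rewrite -/D hD.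
    by move=> a _; rewrite bin_small ?mulr0.
  by rewrite mulr1.
- move=> hneg; have hD : (n.+2 <= D)%N by move: hneg; rewrite hc1; lia.
  have -> : ((n.+1)%:Z - ci_c1 n ds) = D%:Z by rewrite hc1; lia.
  rewrite -pmulrn gbinom_nat; last exact: ltnW.
  rewrite hTd mulrDr mulr1 mulrA -expr2 sqrr_sign mul1r addrC lerD2l.
  rewrite -hockey /S; apply: ler_sum => a _.
  rewrite -[X in X <= _]mul1r; apply: ler_wpM2r; first exact: ler0n.
  exact: Gge.
Qed.
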